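(* Let $\mathcal{P}=(\mathrm{Var},C)$ be a non-overlapping program and let $\varphi=\mathbb{P}_{\bowtie\lambda}(\lozenge G)$ with $\bowtie\in\{<,\leq\}$ be a safety reachability property such that $\mathcal{P}\not\models\varphi$. Then a set $E\subseteq C$ of commands is a high-level counterexample for $\mathcal{P}$ and $\varphi$ if and only if it is a program-level counterexample for $\mathcal{P}$ and $\{\varphi\}$.
   Context: Programs: a program $\mathcal{P}=(\mathrm{Var},C)$ consists of a finite set $\mathrm{Var}$ of variables, each with a finite integer range and an initial value, and a finite set $C$ of guarded commands of the form $g\to p_1:u_1+\dots+p_n:u_n$, where the guard $g$ is a Boolean expression over $\mathrm{Var}$, the $p_i$ are expressions over $\mathrm{Var}$ that evaluate to a probability distribution in every state satisfying $g$, and each update $u_i$ assigns expressions over $\mathrm{Var}$ to variables. A state is a valuation of $\mathrm{Var}$. A program is non-overlapping if no state satisfies the guards of two distinct commands. The underlying MC $[\![\mathcal{P}]\!]$ has the valuations as states, the initial valuation as initial state, and from a state $s$ in which command $g\to\sum_i p_i:u_i$ is enabled it moves to $u_i(s)$ with probability $p_i(s)$. $\mathsf{fixdl}(\mathcal{P})$ is $\mathcal{P}$ extended with a command that is enabled exactly in states where no guard holds and produces a self-loop. For $E\subseteq C$, $\mathcal{P}_{|E}=(\mathrm{Var},E)$. For $G$ a set of states (given by a predicate), $\mathcal{P}\models\mathbb{P}_{\bowtie\lambda}(\lozenge G)$ iff in $[\![\mathsf{fixdl}(\mathcal{P})]\!]$ the probability of reaching $G$ from the initial state is $\bowtie\lambda$.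 A high-level counterexample for $\mathcal{P}$ and $\varphi$ (with $\mathcal{P}\not\models\varphi$) is a set $E\subseteq C$ with $\mathsf{fixdl}(\mathcal{P}_{|E})\not\models\varphi$. A program-level counterexample for $\mathcal{P}$ and a specification $\Phi$ (with $\mathcal{P}\not\models\Phi$) is a set $E\subseteq C$ such that for every non-overlapping program $\mathcal{P}'=(\mathrm{Var},E'')$ with $E''\supseteq E$ we have $\mathsf{fixdl}(\mathcal{P}')\not\models\Phi$. *)

(* Defs.v *)
From HB Require Import structures.
From mathcomp Require Import all_boot all_order all_algebra.
From mathcomp Require Import boolp classical_sets reals.
From Stdlib Require List.
Set Implicit Arguments. Unset Strict Implicit. Unset Printing Implicit Defensive.
Import Order.TTheory GRing.Theory Num.Theory.
Local Open Scope ring_scope.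

Record vars := Vars {
  var_t : finType;
  lo : var_t -> int;
  hi : var_t -> int;
  init : var_t -> int;
  init_range : forall v, lo v <= init v <= hi v }.

Definition state (X : vars) :=
  {f : var_t X -> int | forall v, lo v <= f v <= hi v}.

Definition init_state (X : vars) : state X := exist _ (@init X) (@init_range X).

Section Programs.
Variables (R : realType) (X : vars).

(* A guarded command g -> p_1:u_1 + ... + p_n:u_n, with expressions given
   semantically as functions of the state. *)
Record command := Command {
  guard : state X -> bool;
  updates : seq ((state X -> R) * (state X -> state X)) }.

Definition wf_command (c : command) : Prop :=
  forall s, guard c s ->
    (forall pu, List.In pu (updates c) -> 0 <= pu.1 s) /\
    \sum_(pu <- updates c) pu.1 s = 1.

Definition program := seq command.

Definition wf_program (C : program) : Prop := forall c, List.In c C -> wf_command c.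

Definition nonoverlapping (C : program) : Prop :=
  forall c1 c2 s, List.In c1 C -> List.In c2 C -> guard c1 s -> guard c2 s -> c1 = c2.

Definition subcmds (E C : program) : Prop := forall c, List.In c E -> List.In c C.

Definition deadlock_cmd (C : program) : command :=
  Command (fun s => ~~ has (fun c => guard c s) C) [:: (fun _ => 1, id)].

Definition fixdl (C : program) : program := rcons C (deadlock_cmd C).

(* Transition distribution of the underlying MC [[P]] at s (for non-overlapping
   programs the enabled command, if any, is unique): list of (prob, successor). *)
Definition mc_step (C : program) (s : state X) : seq (R * state X) :=
  match [seq c <- C | guard c s] with
  | c :: _ => [seq (pu.1 s, pu.2 s) | pu <- updates c]
  | [::] => [::]
  end.

Fixpoint reach_n (C : program) (G : state X -> bool) (n : nat) (s : state X) : R :=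
  if G s then 1 else
  match n with
  | 0 => 0
  | n'.+1 => \sum_(ps <- mc_step C s) ps.1 * reach_n C G n' ps.2
  end.

(* probability of eventually reaching G from the initial state in [[C]]:
   supremum (= limit) of the bounded reachability probabilities *)
Definition reach_prob (C : program) (G : state X -> bool) : R :=
  sup [set reach_n C G n (init_state X) | n in [set: nat]].

Inductive cmp := CLt | CLe.
Definition cmp_rel (b : cmp) (x y : R) : bool :=
  match b with CLt => x < y | CLe => x <= y end.

Record prop := Prop_ { p_cmp : cmp; p_lam : R; p_goal : state X -> bool }.

Definition models (C : program) (phi : prop) : Prop :=
  cmp_rel (p_cmp phi) (reach_prob (fixdl C) (p_goal phi)) (p_lam phi).

Definition models_spec (C : program) (Phi : seq prop) : Prop :=
  forall phi, List.In phi Phi -> models C phi.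

Definition high_level_cex (C : program) (phi : prop) (E : program) : Prop :=
  subcmds E C /\ ~ models (fixdl E) phi.

Definition program_level_cex (C : program) (Phi : seq prop) (E : program) : Prop :=
  subcmds E C /\
  forall E'' : program, wf_program E'' -> nonoverlapping E'' -> subcmds E E'' ->
    ~ models_spec (fixdl E'') Phi.

End Programs.

(* Main.v *)
Require Import Defs.
From mathcomp Require Import all_boot all_order all_algebra.
From mathcomp Require Import boolp classical_sets reals.
From Stdlib Require List.
Set Implicit Arguments. Unset Strict Implicit. Unset Printing Implicit Defensive.
Import Order.TTheory GRing.Theory Num.Theory.
Local Open Scope ring_scope.

Section Aux.
Variables (R : realType) (X : vars).

Lemma sum_ge0_In (T : Type) (l : seq T) (F : T -> R) :
  (forall x, List.In x l -> 0 <= F x) -> 0 <= \sum_(x <- l) F x.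
Proof.
elim: l => [|a l IH] H; first by rewrite big_nil.
rewrite big_cons addr_ge0 //; first by apply: H; left.
by apply: IH => x Hx; apply: H; right.
Qed.

Lemma sum_le_In (T : Type) (l : seq T) (F G : T -> R) :
  (forall x, List.In x l -> F x <= G x) -> \sum_(x <- l) F x <= \sum_(x <- l) G x.
Proof.
elim: l => [|a l IH] H; first by rewrite !big_nil.
rewrite !big_cons lerD //; first by apply: H; left.
by apply: IH => x Hx; apply: H; right.
Qed.

Lemma In_filter (T : Type) (p : pred T) (l : seq T) x :
  List.In x (filter p l) -> List.In x l /\ p x.
Proof.
elim: l => [|a l IH] //=; case: ifP => pa /=.
  by case=> [<-|/IH[]]; [split=> //; left | split=> //; right].
by move=> /IH[]; split=> //; right.
Qed.

Lemma In_filter_intro (T : Type) (p : pred T) (l : seq T) x :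
  List.In x l -> p x -> List.In x (filter p l).
Proof.
elim: l => [|a l IH] //= [<- px|/IH H px]; first by rewrite px; left.
by case: (p a) => /=; [right|]; apply: H.
Qed.

Definition FF (E : program R X) := fixdl (fixdl E).

Lemma mc_stepE (E : program R X) s :
  mc_step (FF E) s =
  match [seq c <- E | guard c s] with
  | c :: _ => [seq (pu.1 s, pu.2 s) | pu <- updates c]
  | [::] => [:: (1, s)]
  end.
Proof.
rewrite /mc_step /FF /fixdl -!cats1 -catA filter_cat.
case E0: [seq c <- E | guard c s] => [|c l] //=.
have -> : has (fun c => guard c s) E = false by rewrite has_count -size_filter E0.
done.
Qed.

Lemma reach_ge0 (E : program R X) G n s :
  wf_program E -> 0 <= reach_n (FF E) G n s.
Proof.
move=> wf; elim: n s => [|n IH] s /=; first by case: (G s).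
case: (G s) => //; rewrite mc_stepE.
case E0: [seq c <- E | guard c s] => [|c l].
  by rewrite big_cons big_nil addr0 mul1r IH.
have [cin gc] : List.In c E /\ guard c s.
  by apply: (@In_filter _ (fun c => guard c s)); rewrite E0; left.
have [pos _] := wf c cin s gc.
rewrite big_map; apply: sum_ge0_In => pu Hpu /=.
by rewrite mulr_ge0 //; apply: pos.
Qed.

Lemma reach_le1 (E : program R X) G n s :
  wf_program E -> reach_n (FF E) G n s <= 1.
Proof.
move=> wf; elim: n s => [|n IH] s /=; first by case: (G s).
case: (G s) => //; rewrite mc_stepE.
case E0: [seq c <- E | guard c s] => [|c l].
  by rewrite big_cons big_nil addr0 mul1r IH.
have [cin gc] : List.In c E /\ guard c s.
  by apply: (@In_filter _ (fun c => guard c s)); rewrite E0; left.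
have [pos sum1] := wf c cin s gc.
rewrite big_map -sum1; apply: sum_le_In => pu Hpu /=.
by rewrite -[X in _ <= X]mulr1 ler_wpM2l //; apply: pos.
Qed.

Lemma reach_dead0 (E : program R X) G n s :
  [seq c <- E | guard c s] = [::] -> ~~ G s -> reach_n (FF E) G n s = 0.
Proof.
move=> E0 nG; elim: n => [|n IH] /=; rewrite (negbTE nG) //.
by rewrite mc_stepE E0 big_cons big_nil addr0 mul1r IH.
Qed.

Lemma reach_mono (E E'' C : program R X) G n s :
  wf_program C -> subcmds E C -> wf_program E'' -> nonoverlapping E'' ->
  subcmds E E'' -> reach_n (FF E) G n s <= reach_n (FF E'') G n s.
Proof.
move=> wfC sEC wf'' no'' sEE; elim: n s => [|n IH] s.
  by rewrite /=; case: (G s).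
case Gs: (G s); first by rewrite /= Gs.
case E0: [seq c <- E | guard c s] => [|c l].
  by rewrite reach_dead0 ?Gs // reach_ge0.
rewrite /= Gs !mc_stepE E0.
have [cin gc] : List.In c E /\ guard c s.
  by apply: (@In_filter _ (fun c => guard c s)); rewrite E0; left.
case E1: [seq c <- E'' | guard c s] => [|c' l'].
  have : List.In c [seq c <- E'' | guard c s].
    by apply: In_filter_intro => //; apply: sEE.
  by rewrite E1.
have [cin' gc'] : List.In c' E'' /\ guard c' s.
  by apply: (@In_filter _ (fun c => guard c s)); rewrite E1; left.
have <- := no'' c c' s (sEE _ cin) cin' gc gc'.
have [pos _] := wfC c (sEC _ cin) s gc.
rewrite !big_map; apply: sum_le_In => pu Hpu /=.
by rewrite ler_wpM2l //; apply: pos.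
Qed.

End Aux.

Theorem proposition3 (R : realType) (X : vars) (C : program R X)
  (b : cmp) (lam : R) (G : state X -> bool) :
  wf_program C -> nonoverlapping C ->
  ~ models C (Prop_ b lam G) ->
  forall E : program R X, subcmds E C ->
    (high_level_cex C (Prop_ b lam G) E <->
     program_level_cex C [:: Prop_ b lam G] E).
Proof.
move=> wfC noC _ E sEC; split.
  case=> _ nm; split=> // E'' wf'' no'' sEE msp.
  have m'' := msp _ (or_introl erefl).
  apply: nm; move: m''; rewrite /models /=.
  have le : reach_prob (fixdl (fixdl E)) G <= reach_prob (fixdl (fixdl E'')) G.
    apply: ge_sup; first by exists (reach_n (FF E) G 0 (init_state X)); exists 0%N.
    move=> _ [n _ <-].
    apply: le_trans (reach_mono G n (init_state X) wfC sEC wf'' no'' sEE) _.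
    apply: ub_le_sup; last by exists n.
    exists 1 => _ [m _ <-]; exact: reach_le1.
  clear msp; by case: b => /=; [apply: le_lt_trans | apply: le_trans].
case=> _ H; split=> //.
have wfE : wf_program E by move=> c /sEC; apply: wfC.
have noE : nonoverlapping E by move=> c1 c2 s /sEC H1 /sEC H2; apply: noC.
move=> m; apply: (H E wfE noE) => // phi [<-|[]] //.
Qed.
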